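(* Consider an $N$-player quadratic game with costs $J_m(x)=\frac12 x^\top Q_m x+b_m^\top x+p_m$, where $Q_m\in\mathbb{R}^{N\times N}$ is symmetric, $b_m\in\mathbb{R}^N$, $p_m\in\mathbb{R}$. Let players $1,\dots,n$ be deceptive, each $i\in[n]$ deceiving a nonempty set $\mathcal{D}_i\subset[N]\setminus\{i\}$, and let $\delta=(\delta_1,\dots,\delta_n)\in\mathbb{R}^n$ be fixed. Let $\bar\omega_1,\dots,\bar\omega_N$ be pairwise distinct positive rationals, $T>0$ a common period of all $\sin(\bar\omega_m\tau)$, and $\tilde\mu$ defined by $\tilde\mu_m(\tau)=\sin(\bar\omega_m\tau)+\delta_m\sum_{j\in\mathcal{D}_m}\sin(\bar\omega_j\tau)$ for $m\in[n]$ and $\tilde\mu_m(\tau)=\sin(\bar\omega_m\tau)$ for $m\notin[n]$. Then for every $a>0$, $k>0$, $u\in\mathbb{R}^N$ and $m\in[N]$, $$\frac{1}{T}\int_0^T -\frac{2k}{a}J_m\big(u+a\tilde\mu(\tau)\big)\sin(\bar\omega_m\tau)\,d\tau=-k\big(\mathcal{Q}_\delta u+\mathcal{B}_\delta\big)_m$$ exactly (with no remainder term), where $\mathcal{Q}_\delta\in\mathbb{R}^{N\times N}$ has $m$-th row $(Q_m)_{m:}+\sum_{j\in[n]:\,m\in\mathcal{D}_j}\delta_j (Q_m)_{j:}$ and $\mathcal{B}_\delta\in\mathbb{R}^N$ has $m$-th entry $(b_m)_m+\sum_{j\in[n]:\,m\in\mathcal{D}_j}\delta_j (b_m)_j$.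
   Context: For a matrix $Q$, $(Q)_{j:}$ denotes its $j$-th row; for a vector $b$, $(b)_j$ its $j$-th entry. *)

(* Defs.v *)
From HB Require Import structures.
From mathcomp Require Import all_boot all_order all_algebra.
From mathcomp Require Import all_classical all_reals all_analysis.
Set Implicit Arguments. Unset Strict Implicit. Unset Printing Implicit Defensive.
Import Order.TTheory GRing.Theory Num.Theory.
Import numFieldNormedType.Exports.
Local Open Scope ring_scope.

(* Players are indexed by 'I_N; the deceptive players 1..n are the
   ordinals widen_ord hn j for j : 'I_n (i.e. the first n players). *)

Definition Jcost (R : realType) (N : nat) (Q : 'I_N -> 'M[R]_N)
  (b : 'I_N -> 'cV[R]_N) (p : 'I_N -> R) (m : 'I_N) (x : 'cV[R]_N) : R :=
  2^-1 * (x^T *m Q m *m x) ord0 ord0 + ((b m)^T *m x) ord0 ord0 + p m.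

Definition mu_tilde (R : realType) (N n : nat) (hn : (n <= N)%N)
  (om : 'I_N -> R) (delta : 'I_n -> R) (D : 'I_n -> {set 'I_N}) (tau : R)
  : 'cV[R]_N :=
  \col_(m < N) (sin (om m * tau) +
     \sum_(i < n | widen_ord hn i == m)
        delta i * \sum_(j in D i) sin (om j * tau)).

Definition Qdelta (R : realType) (N n : nat) (hn : (n <= N)%N)
  (Q : 'I_N -> 'M[R]_N) (delta : 'I_n -> R) (D : 'I_n -> {set 'I_N})
  : 'M[R]_N :=
  \matrix_(m < N, l < N) (Q m m l +
     \sum_(j < n | m \in D j) delta j * Q m (widen_ord hn j) l).

Definition Bdelta (R : realType) (N n : nat) (hn : (n <= N)%N)
  (b : 'I_N -> 'cV[R]_N) (delta : 'I_n -> R) (D : 'I_n -> {set 'I_N})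
  : 'cV[R]_N :=
  \col_(m < N) (b m m ord0 +
     \sum_(j < n | m \in D j) delta j * b m (widen_ord hn j) ord0).

(* Main.v *)
Require Import Defs.
From HB Require Import structures.
From mathcomp Require Import all_boot all_order all_algebra.
From mathcomp Require Import all_classical all_reals all_analysis.
From mathcomp Require Import ring lra.
Import Order.TTheory GRing.Theory Num.Theory.
Import numFieldNormedType.Exports.
Local Open Scope classical_set_scope.
Local Open Scope ring_scope.
Section S.
Variable R : realType.
Notation mu := (@lebesgue_measure R).

Lemma der_cont (F : R -> R) (f : R -> R) :
  (forall x : R, is_derive x (1:R) F (f x)) -> continuous F.
Proof.
by move=> dF x; apply/differentiable_continuous/derivable1_diffP; case: (dF x).
Qed.

Lemma ftc0 (f F : R -> R) (T : R) : 0 < T -> continuous f ->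
  (forall x : R, is_derive x (1:R) F (f x)) ->
  \int[mu]_(x in `[0, T]) f x = F T - F 0.
Proof.
move=> hT cf dF.
have cF := @der_cont F f dF.
rewrite /Rintegral (@continuous_FTC2 _ f F) //.
- exact/continuous_subspaceT.
- split.
  + by move=> x _; case: (dF x).
  + by apply: cvg_at_right_filter; exact: cF.
  + by apply: cvg_at_left_filter; exact: cF.
- by move=> x _; rewrite derive1E derive_val.
Qed.

Lemma der_lin (c x : R) : is_derive x (1:R) (fun t : R => c * t) c.
Proof.
have h := @is_deriveZ R R R id c x 1 1 (is_derive_id x 1).
by apply: is_derive_eq h _; rewrite /= scaler1.
Qed.

Lemma der_scale (k x : R) (g : R -> R) dg : is_derive x (1:R) g dg ->
  is_derive x (1:R) (fun t : R => k * g t) (k * dg).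
Proof. by move=> h; have := @is_deriveZ R R R g k x 1 dg h. Qed.

Lemma der_sinc (c x : R) : is_derive x (1:R) (fun t : R => sin (c * t)) (cos (c * x) * c).
Proof.
exact: (@is_derive1_comp R sin (fun t => c * t) x (cos (c * x)) c (is_derive_sin _) (der_lin c x)).
Qed.

Lemma der_cosc (c x : R) : is_derive x (1:R) (fun t : R => cos (c * t)) (- sin (c * x) * c).
Proof.
exact: (@is_derive1_comp R cos (fun t => c * t) x _ c (is_derive_cos _) (der_lin c x)).
Qed.

Lemma cont_sinc (c : R) : continuous (fun t : R => sin (c * t)).
Proof. exact: (@der_cont _ _ (der_sinc c)). Qed.

Lemma cont_cosc (c : R) : continuous (fun t : R => cos (c * t)).
Proof. exact: (@der_cont _ _ (der_cosc c)). Qed.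

Definition good (T c : R) := sin (c * T) = 0 /\ cos (c * T) = 1.

Lemma goodD T c d : good T c -> good T d -> good T (c + d).
Proof.
move=> [s1 c1] [s2 c2]; rewrite /good mulrDl sinD cosD s1 c1 s2 c2; split; ring.
Qed.

Lemma goodN T c : good T c -> good T (- c).
Proof. by move=> [s1 c1]; rewrite /good mulNr sinN cosN s1 c1 oppr0. Qed.

Lemma int_sinc T c : 0 < T -> good T c ->
  \int[mu]_(x in `[0, T]) sin (c * x) = 0.
Proof.
move=> hT [s1 c1]; have [->|c0] := eqVneq c 0.
  have dF : forall x : R, is_derive x (1:R) (fun _ : R => (0:R)) (sin (0 * x)).
    by move=> x; apply: is_derive_eq; rewrite mul0r sin0.
  by rewrite (@ftc0 (fun x => sin (0 * x)) (fun _ => 0) T hT (cont_sinc 0) dF) subrr.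
have dF : forall x : R, is_derive x (1:R) (fun t => (- c^-1) * cos (c * t)) (sin (c * x)).
  move=> x; apply: (is_derive_eq (@der_scale (- c^-1) x _ _ (der_cosc c x))).
  by field.
by rewrite (@ftc0 (fun x => sin (c * x)) (fun t => (- c^-1) * cos (c * t)) T hT (cont_sinc c) dF) c1 mulr0 cos0 subrr.
Qed.

Lemma int_cosc T c : 0 < T -> good T c ->
  \int[mu]_(x in `[0, T]) cos (c * x) = if c == 0 then T else 0.
Proof.
move=> hT [s1 c1]; have [->|c0] := eqVneq c 0.
  have dF : forall x : R, is_derive x (1:R) id (cos (0 * x)).
    by move=> x; apply: is_derive_eq; rewrite mul0r cos0.
  by rewrite (@ftc0 (fun x => cos (0 * x)) id T hT (cont_cosc 0) dF) subr0.
have dF : forall x : R, is_derive x (1:R) (fun t => c^-1 * sin (c * t)) (cos (c * x)).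
  move=> x; apply: (is_derive_eq (@der_scale (c^-1) x _ _ (der_sinc c x))).
  by field.
by rewrite (@ftc0 (fun x => cos (c * x)) (fun t => c^-1 * sin (c * t)) T hT (cont_cosc c) dF) s1 !mulr0 sin0 ?mulr0 ?subrr.
Qed.

Lemma int_cont T (f : R -> R) : continuous f ->
  mu.-integrable `[0, T] (EFin \o f).
Proof.
move=> cf; apply: continuous_compact_integrable; first exact: segment_compact.
exact/continuous_subspaceT.
Qed.

Lemma cont_sum (I : Type) (s : seq I) (P : pred I) (F : I -> R -> R) :
  (forall i, continuous (F i)) ->
  continuous (fun x => \sum_(k <- s | P k) F k x).
Proof.
move=> cF; elim: s => [|h t ih].
  under eq_fun do rewrite big_nil; exact: cst_continuous.
under eq_fun do rewrite big_cons; case: (P h) => //.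
by move=> x; apply: continuousD; [exact: cF | exact: ih].
Qed.

Lemma Rint_sum T (I : Type) (s : seq I) (P : pred I) (F : I -> R -> R) :
  (forall i, continuous (F i)) ->
  \int[mu]_(x in `[0, T]) (\sum_(k <- s | P k) F k x) =
  \sum_(k <- s | P k) \int[mu]_(x in `[0, T]) F k x.
Proof.
move=> cF; elim: s => [|h t ih].
  under eq_Rintegral do rewrite big_nil.
  by rewrite big_nil Rintegral_cst // mul0r.
under eq_Rintegral do rewrite big_cons; rewrite big_cons.
case: (P h) => //; rewrite RintegralD //; last 2 first.
- exact: int_cont.
- exact/int_cont/cont_sum.
by rewrite ih.
Qed.

Lemma contD (f g : R -> R) : continuous f -> continuous g ->
  continuous (fun x => f x + g x).
Proof. move=> cf cg x; exact: (continuousD (cf x) (cg x)). Qed.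

Lemma contB (f g : R -> R) : continuous f -> continuous g ->
  continuous (fun x => f x - g x).
Proof. move=> cf cg x; exact: (continuousB (cf x) (cg x)). Qed.

Lemma sin_prod (c d t : R) :
  sin (c * t) * sin (d * t) = 2^-1 * (cos ((c + - d) * t) - cos ((c + d) * t)).
Proof.
rewrite !mulrDl !mulNr cosD cosD cosN sinN. field; rewrite ?pnatr_eq0 //.
Qed.

Lemma sin_prod3 (c d e t : R) :
  sin (c * t) * sin (d * t) * sin (e * t) = 4^-1 * (sin ((c + d + - e) * t)
   + sin ((c + - d + e) * t) + sin ((- c + d + e) * t) - sin ((c + d + e) * t)).
Proof.
rewrite !mulrDl !mulNr !sinD !cosD !cosN !sinN. field; rewrite ?pnatr_eq0 //.
Qed.

Lemma cont_ss (c d : R) : continuous (fun t : R => sin (c * t) * sin (d * t)).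
Proof. by move=> x; apply: (@continuousM _ _ (fun t => sin (c * t)) (fun t => sin (d * t))); [exact: cont_sinc|exact: cont_sinc]. Qed.

Lemma cont_sss (c d e : R) :
  continuous (fun t : R => sin (c * t) * sin (d * t) * sin (e * t)).
Proof. by move=> x; apply: (@continuousM _ _ (fun t => sin (c * t) * sin (d * t)) (fun t => sin (e * t))); [exact: cont_ss|exact: cont_sinc]. Qed.

Lemma int_ss T c d : 0 < T -> good T c -> good T d -> c + d != 0 ->
  \int[mu]_(x in `[0, T]) (sin (c * x) * sin (d * x)) = if c == d then T / 2 else 0.
Proof.
move=> hT gc gd cd.
under eq_Rintegral do rewrite sin_prod.
rewrite RintegralZl //; last by apply/int_cont; apply: contB; exact: cont_cosc.
rewrite RintegralB //; try exact/int_cont/cont_cosc.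
rewrite !int_cosc //; last 2 first.
- exact: goodD.
- exact/goodD/goodN.
rewrite (negbTE cd) subr0 subr_eq0.
by case: (c == d); rewrite ?mulr0 // mulrC.
Qed.

Lemma int_sss T c d e : 0 < T -> good T c -> good T d -> good T e ->
  \int[mu]_(x in `[0, T]) (sin (c * x) * sin (d * x) * sin (e * x)) = 0.
Proof.
move=> hT gc gd ge.
under eq_Rintegral do rewrite sin_prod3.
rewrite RintegralZl //; last first.
  apply/int_cont; apply: contB; last exact: cont_sinc.
  apply: contD; last exact: cont_sinc.
  by apply: contD; exact: cont_sinc.
rewrite RintegralB //; last exact/int_cont/cont_sinc; last first.
  apply/int_cont.
  apply: contD; last exact: cont_sinc.
  by apply: contD; exact: cont_sinc.
rewrite RintegralD //; last exact/int_cont/cont_sinc; last first.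
  by apply/int_cont; apply: contD; exact: cont_sinc.
rewrite RintegralD //; try exact/int_cont/cont_sinc.
rewrite !int_sinc //; first by rewrite !addr0 subr0 mulr0.
all: by repeat first [done | apply: goodD | apply: goodN].
Qed.
End S.
Arguments good {R}.

Section A2.
Variable R : realType.

Lemma J_expand N (Q : 'M[R]_N) (Qs : Q^T = Q) (b u v : 'cV[R]_N) (a : R) :
  2^-1 * ((u + a *: v)^T *m Q *m (u + a *: v)) ord0 ord0 + (b^T *m (u + a *: v)) ord0 ord0
  = 2^-1 * (u^T *m Q *m u) ord0 ord0 + (b^T *m u) ord0 ord0
    + a * ((Q *m u + b)^T *m v) ord0 ord0 + a ^+ 2 / 2 * (v^T *m Q *m v) ord0 ord0.
Proof.
have key : (v^T *m Q *m u) ord0 ord0 = (u^T *m Q *m v) ord0 ord0.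
  have -> : v^T *m Q *m u = (u^T *m Q *m v)^T by rewrite !trmx_mul trmxK Qs mulmxA.
  by rewrite mxE.
have e2 : (Q *m u + b)^T *m v = u^T *m Q *m v + b^T *m v.
  by rewrite linearD /= trmx_mul Qs mulmxDl.
have t1 : (u + a *: v)^T = u^T + a *: v^T by rewrite linearD linearZ.
rewrite e2 t1 !mulmxDl !mulmxDr -!scalemxAl -!scalemxAr.
move: (u^T *m Q *m u) (u^T *m Q *m v) (v^T *m Q *m u) (v^T *m Q *m v) (b^T *m u) (b^T *m v) key => A B C E F G key.
rewrite !mxE key.
field; rewrite ?pnatr_eq0 //.
Qed.
End A2.

Section A.
Variable R : realType.

Definition Mmat N n (hn : (n <= N)%N) (delta : 'I_n -> R) (D : 'I_n -> {set 'I_N}) : 'M[R]_N :=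
  \matrix_(l, j) ((l == j)%:R + \sum_(i < n | widen_ord hn i == l) delta i * (j \in D i)%:R).

Arguments Mmat {N n}.

Lemma w_ident N n (hn : (n <= N)%N) (Q : 'I_N -> 'M[R]_N) (b : 'I_N -> 'cV[R]_N)
  (delta : 'I_n -> R) (D : 'I_n -> {set 'I_N}) (u : 'cV[R]_N) (m : 'I_N) :
  ((Q m *m u + b m)^T *m Mmat hn delta D) ord0 m = (Qdelta hn Q delta D *m u + Bdelta hn b delta D) m ord0.
Proof.
set G := fun l => (Q m *m u + b m) l ord0.
have -> : (Qdelta hn Q delta D *m u + Bdelta hn b delta D) m ord0 =
    G m + \sum_(j < n | m \in D j) delta j * G (widen_ord hn j).
  rewrite /G /Qdelta /Bdelta !mxE.
  under eq_bigr do rewrite !mxE mulrDl.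
  rewrite big_split /=.
  under [X in _ + X + _ = _]eq_bigr do rewrite mulr_suml.
  rewrite (exchange_big _ _ _ _ (fun i => m \in D i)) /=.
  under [X in _ = _ + X]eq_bigr do rewrite !mxE mulrDr big_distrr /=.
  rewrite big_split /=.
  under [X in _ + X + _ = _]eq_bigr do under eq_bigr do rewrite -mulrA.
  ring.
rewrite mxE.
under eq_bigr => l _ do rewrite [X in X * _]mxE [X in _ * X]mxE -/(G l) mulrDr big_distrr /=.
rewrite big_split /=.
rewrite (bigD1 m) //= eqxx mulr1 big1 ?addr0; last first.
  by move=> j /negbTE; rewrite eq_sym => ->; rewrite mulr0.
congr (_ + _).
under eq_bigr do rewrite big_mkcond /=.
rewrite exchange_big /= [RHS]big_mkcond /=.
apply: eq_bigr => i0 _.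
rewrite -big_mkcond /= (big_pred1 (widen_ord hn i0)); last by move=> x; rewrite /= eq_sym.
by case: (m \in D i0); rewrite ?mulr1 ?mulr0 // mulrC.
Qed.
End A.
Arguments Mmat {R N n}.


Section A4.
Variable R : realType.

Lemma rcol N (r : 'rV[R]_N) (f : 'I_N -> R) :
  (r *m \col_j f j) ord0 ord0 = \sum_j r ord0 j * f j.
Proof. by rewrite mxE; apply: eq_bigr => j _; rewrite mxE. Qed.

Lemma qcol N (P : 'M[R]_N) (f : 'I_N -> R) :
  ((\col_j f j)^T *m P *m \col_j f j) ord0 ord0 =
  \sum_j' \sum_j P j j' * (f j * f j').
Proof.
rewrite mxE; apply: eq_bigr => j' _; rewrite !mxE mulr_suml.
by apply: eq_bigr => j _; rewrite !mxE; ring.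
Qed.

Lemma muM N n (hn : (n <= N)%N) (om : 'I_N -> R) (delta : 'I_n -> R)
  (D : 'I_n -> {set 'I_N}) (tau : R) :
  mu_tilde hn om delta D tau = Mmat hn delta D *m \col_j sin (om j * tau).
Proof.
apply/matrixP => l z; rewrite (ord1 z) !mxE.
under [RHS]eq_bigr do rewrite !mxE mulrDl.
rewrite big_split /= [in RHS](bigD1 l) //= eqxx mul1r.
rewrite [X in _ = _ + X + _]big1 ?addr0; last first.
  by move=> j /negbTE; rewrite eq_sym => ->; rewrite mul0r.
congr (_ + _).
under [RHS]eq_bigr do rewrite mulr_suml.
rewrite exchange_big /=.
apply: eq_bigr => i _.
rewrite big_mkcond big_distrr /=; apply: eq_bigr => j _.
by case: (j \in D i); rewrite ?mulr1 ?mulr0 ?mul0r // mulrA.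
Qed.

Lemma contMl (k : R) (f : R -> R) : continuous f -> continuous (fun x => k * f x).
Proof.
move=> cf x; have := @continuousZl_tmp R R^o R f k x (cf x); exact.
Qed.
End A4.

Theorem mainTheorem2 (R : realType) (N n : nat) (hn : (n <= N)%N)
  (Q : 'I_N -> 'M[R]_N) (b : 'I_N -> 'cV[R]_N) (p : 'I_N -> R)
  (hQ : forall m, (Q m)^T = Q m)
  (D : 'I_n -> {set 'I_N})
  (hD_ne : forall i, D i != finset.set0)
  (hD_self : forall i, widen_ord hn i \notin D i)
  (delta : 'I_n -> R)
  (om : 'I_N -> rat)
  (hom_pos : forall m, 0 < om m)
  (hom_inj : injective om)
  (T : R) (hT : 0 < T)
  (hper : forall m tau, sin (ratr (om m) * (tau + T)) = sin (ratr (om m) * tau))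
  (a k : R) (ha : 0 < a) (hk : 0 < k) (u : 'cV[R]_N) (m : 'I_N) :
  T^-1 * (\int[lebesgue_measure]_(tau in `[0, T])
     (- (2 * k / a) *
        Jcost Q b p m (u + a *: mu_tilde hn (fun j => ratr (om j)) delta D tau)
        * sin (ratr (om m) * tau)))
  = - k * (Qdelta hn Q delta D *m u + Bdelta hn b delta D) m ord0.
Proof.
pose s j (t : R) := sin (ratr (om j) * t).
have ompos : forall j, 0 < (ratr (om j) : R) by move=> j; rewrite ltr0q.
have gd : forall j, good T (ratr (om j)).
  move=> j; split.
    by have := hper j 0; rewrite add0r mulr0 sin0.
  move: (hper j (pi / 2 / ratr (om j))) (ompos j).
  move: (ratr (om j) : R) => c hc cpos.
  have e : c * (pi / 2 / c) = pi / 2.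
    by field; exact: (lt0r_neq0 cpos).
  move: hc; rewrite mulrDr e sinD sin_pihalf cos_pihalf mul1r mul0r addr0.
  done.
set M := Mmat hn delta D.
set g := Q m *m u + b m.
set w := g^T *m M.
set P := M^T *m Q m *m M.
set J0 := Jcost Q b p m u.
pose F1 t := \sum_j w ord0 j * (s j t * s m t).
pose F2 t := \sum_j' \sum_j P j j' * (s j t * s j' t * s m t).
have pt : forall t, - (2 * k / a) *
    Jcost Q b p m (u + a *: mu_tilde hn (fun j => ratr (om j)) delta D t) * sin (ratr (om m) * t)
  = (- (2 * k / a) * J0) * s m t + (- (2 * k / a) * a) * F1 t
    + (- (2 * k / a) * (a ^+ 2 / 2)) * F2 t.
  move=> t; rewrite muM /Jcost J_expand //.
  rewrite mulmxA -/w rcol.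
  have -> : (M *m \col_j sin (ratr (om j) * t))^T *m Q m *m (M *m \col_j sin (ratr (om j) * t))
      = (\col_j sin (ratr (om j) * t))^T *m P *m \col_j sin (ratr (om j) * t).
    by rewrite trmx_mul /P !mulmxA.
  rewrite qcol.
  have e1 : F1 t = (\sum_j w ord0 j * s j t) * s m t.
    by rewrite /F1 mulr_suml; apply: eq_bigr => j _; rewrite mulrA.
  have e2 : F2 t = (\sum_j' \sum_j P j j' * (s j t * s j' t)) * s m t.
    rewrite /F2 mulr_suml; apply: eq_bigr => j' _; rewrite mulr_suml.
    by apply: eq_bigr => j _; rewrite !mulrA.
  rewrite e1 e2 /J0 /Jcost /s; ring.
under eq_Rintegral => t _ do rewrite pt.
have cs : forall j, continuous (s j) by move=> j; exact: cont_sinc.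
have cF1 : continuous F1.
  apply: cont_sum => j; apply: contMl; exact: cont_ss.
have cF2 : continuous F2.
  apply: cont_sum => j'; apply: cont_sum => j; apply: contMl; exact: cont_sss.
rewrite RintegralD //; last 2 first.
- by apply: int_cont; apply: contD; apply: contMl.
- by apply: int_cont; apply: contMl.
rewrite RintegralD //; try by apply: int_cont; apply: contMl.
rewrite !RintegralZl //; try by apply: int_cont.
rewrite int_sinc //.
have -> : \int[lebesgue_measure]_(x in `[0, T]) F2 x = 0.
  rewrite /F2 Rint_sum; last first.
    by move=> j'; apply: cont_sum => j; apply: contMl; exact: cont_sss.
  apply: big1 => j' _; rewrite Rint_sum; last first.
    by move=> j; apply: contMl; exact: cont_sss.
  apply: big1 => j _; rewrite RintegralZl //; last by apply: int_cont; exact: cont_sss.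
  by rewrite int_sss // mulr0.
have -> : \int[lebesgue_measure]_(x in `[0, T]) F1 x = w ord0 m * (T / 2).
  rewrite /F1 Rint_sum; last by move=> j; apply: contMl; exact: cont_ss.
  rewrite (bigD1 m) //= big1 ?addr0.
    rewrite RintegralZl //; last by apply: int_cont; exact: cont_ss.
    rewrite int_ss // ?eqxx //.
    by apply: lt0r_neq0; apply: addr_gt0.
  move=> j jm; rewrite RintegralZl //; last by apply: int_cont; exact: cont_ss.
  rewrite int_ss //; last by apply: lt0r_neq0; apply: addr_gt0.
  by rewrite (inj_eq (fmorph_inj _)) (inj_eq hom_inj) (negbTE jm) mulr0.
rewrite -w_ident -/g -/M -/w.
field.
by apply/andP; split; apply: lt0r_neq0.
Qed.
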